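(* Let $G$ be a finite simple graph, $P$ a pebble distribution, and $U$ a unit distribution of nonzero size on a vertex $u$, disjoint from $P$. Let $c$ be a cooperation vertex such that, under $P+U$, a pebbling move removing pebbles from $c$ can be made after some pebbling sequence (i.e. $c$ is $2$-reachable under $P+U$). Then either $c$ has two neighbors $e,f$ each with cooperation excess at least $1$ and with $M(e)<M(c)$, $M(f)<M(c)$, or $c$ has a neighbor $d$ with cooperation excess at least $3$ and $M(d)<M(c)$.
   Context: A pebble distribution is a function $V(G)\to\mathbb{Z}_{\geq0}$; $(P+U)(v)=P(v)+U(v)$. A pebbling move removes two pebbles from a vertex and adds one to an adjacent vertex; a pebbling sequence is an executable sequence of moves, and $(P+U)_\sigma$ is the result of applying $\sigma$. A vertex $v$ is $k$-reachable under a distribution if some pebbling sequence yields at least $k$ pebbles on $v$; reachable means $1$-reachable. $\mathrm{reach}(P,v)$ is the largest such $k$; $\mathrm{exc}(P,v)=\mathrm{reach}(P,v)-1$ if $v$ is reachable, else $0$. A cooperation vertex is reachable under $P+U$ but under neither $P$ nor $U$. The cooperation excess of $v$ is $\mathrm{exc}(P+U,v)-\mathrm{exc}(P,v)-\mathrm{exc}(U,v)$. A vertex is utilized by a pebbling sequence if some move of it removes or adds a pebble at that vertex. $M(v)$ is the minimum, over pebbling sequences $\sigma$ from $P+U$ with $(P+U)_\sigma(v)\geq 2$, of the number of cooperation vertices utilized by $\sigma$ (counting $v$ if it is a cooperation vertex); $M(v)=\infty$ if $v$ is not $2$-reachable under $P+U$. *)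

(* Defs.v *)
From Stdlib Require Import ClassicalDescription.
From mathcomp Require Import all_boot all_order all_algebra.
Set Implicit Arguments. Unset Strict Implicit. Unset Printing Implicit Defensive.

Definition pbool (A : Prop) : bool :=
  if excluded_middle_informative A then true else false.

Section Pebbling.
Variables (T : finType) (e : rel T).

Definition dist := T -> nat.

Definition addD (P U : dist) : dist := fun x => P x + U x.

Definition unitD (u : T) (n : nat) : dist := fun x => if x == u then n else 0.

Definition total (D : dist) : nat := \sum_(x : T) D x.

(* a pebbling move (a, b): remove two pebbles from a, add one to adjacent b *)
Definition move := (T * T)%type.

Definition step (D : dist) (m : move) : option dist :=
  let: (a, b) := m in
  if e a b && (2 <= D a) then
    Some (fun x => if x == a then D x - 2 else if x == b then D x + 1 else D x)
  else None.

Fixpoint run (D : dist) (s : seq move) : option dist :=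
  match s with
  | [::] => Some D
  | m :: s' => match step D m with Some D' => run D' s' | None => None end
  end.

Definition kreachable (D : dist) (v : T) (k : nat) : Prop :=
  exists s D', run D s = Some D' /\ k <= D' v.

Definition reachable (D : dist) (v : T) : Prop := kreachable D v 1.

(* reach(D,v): the largest k such that v is k-reachable (any such k is at
   most the total number of pebbles, since moves never increase it) *)
Definition reach (D : dist) (v : T) : nat :=
  \max_(k < (total D).+1 | pbool (kreachable D v k)) k.

Definition exc (D : dist) (v : T) : nat :=
  if pbool (reachable D v) then (reach D v).-1 else 0.

Definition coop_vertex (P U : dist) (v : T) : Prop :=
  reachable (addD P U) v /\ ~ reachable P v /\ ~ reachable U v.

Definition coop_excess (P U : dist) (v : T) : int :=
  (exc (addD P U) v)%:Z - (exc P v)%:Z - (exc U v)%:Z.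

Definition utilized (s : seq move) (w : T) : bool :=
  has (fun m : move => (m.1 == w) || (m.2 == w)) s.

Definition coop_used (P U : dist) (v : T) (s : seq move) : nat :=
  #|[set w : T | pbool (coop_vertex P U w) && (utilized s w || (w == v))]|.

Definition M_le (P U : dist) (v : T) (k : nat) : Prop :=
  exists s D', run (addD P U) s = Some D' /\ 2 <= D' v /\ coop_used P U v s <= k.

(* M(v) : None stands for infinity *)
Definition Mval (P U : dist) (v : T) : option nat :=
  if pbool (kreachable (addD P U) v 2) then
    Some (\big[minn/#|T|]_(k < #|T|.+1 | pbool (M_le P U v k)) k)
  else None.

Definition Mlt (a b : option nat) : bool :=
  match a, b with
  | Some x, Some y => x < y
  | Some _, None => true
  | None, _ => false
  end.

End Pebbling.

(* Main.v *)
Require Import Defs.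
From mathcomp Require Import all_boot all_order all_algebra zify.
From Stdlib Require Import ClassicalDescription.
Import Order.TTheory GRing.Theory Num.Theory.
Require Import Defs.
Arguments step : simpl never.
Set Implicit Arguments. Unset Strict Implicit.

Lemma pboolP (A : Prop) : reflect A (pbool A).
Proof. rewrite /pbool; case: excluded_middle_informative => h; by constructor. Qed.

Lemma run_cat (T : finType) (e : rel T) D s t :
  run e D (s ++ t) = if run e D s is Some D' then run e D' t else None.
Proof. elim: s D => [|m s IH] D //=. case: (step e D m) => //. Qed.

Lemma step_total (T : finType) (e : rel T) (ei : irreflexive e) (D : dist T) (a b : T) (D' : dist T) :
  step e D (a, b) = Some D' -> total D' + 1 = total D.
Proof.
rewrite /step; case: ifP => // /andP [eab Da] [<-].
have ab : a != b by apply/eqP => h; move: eab; rewrite h ei.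
have ba : b != a by rewrite eq_sym.
rewrite /total (bigD1 a) //= [in RHS](bigD1 a) //= (bigD1 b) //= [in RHS](bigD1 b) //=.
rewrite eqxx (negbTE ba) eqxx.
rewrite (eq_bigr (fun x => D x)); last first.
  by move=> i /andP [ia ib]; rewrite (negbTE ia) (negbTE ib).
lia.
Qed.

Lemma run_total (T : finType) (e : rel T) (ei : irreflexive e) s D D' :
  run e D s = Some D' -> total D' <= total D.
Proof.
elim: s D => [|[a b] s IH] D /=; first by move=> [->].
case hs: (step e D (a, b)) => [D1|] // /IH h.
have := step_total ei hs; lia.
Qed.

Lemma le_total (T : finType) (D : dist T) v : D v <= total D.
Proof. by rewrite /total (bigD1 v) //= leq_addr. Qed.

Lemma kreach_le (T : finType) (e : rel T) (ei : irreflexive e) D v k :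
  kreachable e D v k -> k <= total D.
Proof.
case=> s [D' [hr hk]]; apply: (leq_trans hk); apply: (leq_trans (le_total _ v)).
exact: run_total hr.
Qed.

Lemma reach_ge (T : finType) (e : rel T) (ei : irreflexive e) D v k :
  kreachable e D v k -> k <= reach e D v.
Proof.
move=> h; have hk : k < (total D).+1 by rewrite ltnS (kreach_le ei h).
rewrite /reach.
have := @leq_bigmax_cond _ (fun i : 'I_(total D).+1 => pbool (kreachable e D v i))
   (fun i => nat_of_ord i) (Ordinal hk).
apply; exact/pboolP.
Qed.

Lemma kreach_mono (T : finType) (e : rel T) D v k k' :
  k' <= k -> kreachable e D v k -> kreachable e D v k'.
Proof. move=> h [s [D' [hr hk]]]; exists s, D'; split => //; exact: leq_trans hk. Qed.

Lemma kreach_move (T : finType) (e : rel T) D d c :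
  e d c -> c != d -> kreachable e D d 2 -> reachable e D c.
Proof.
move=> edc cd [s [D' [hr h2]]]; exists (s ++ [:: (d, c)]).
rewrite run_cat hr /= /step edc h2 /=.
eexists; split; first reflexivity.
rewrite /= ?(negbTE cd) ?eqxx; lia.
Qed.

Lemma exc0 (T : finType) (e : rel T) D d c :
  e d c -> c != d -> ~ reachable e D c -> exc e D d = 0.
Proof.
move=> edc cd nr; rewrite /exc; case: pboolP => // _.
have : reach e D d <= 1.
  rewrite /reach; apply/bigmax_leqP => i /pboolP hi.
  rewrite leqNgt; apply/negP => h; apply: nr; apply: (kreach_move edc cd).
  exact: kreach_mono hi.
by case: (reach e D d) => [|[|]].
Qed.

Lemma exc_ge (T : finType) (e : rel T) (ei : irreflexive e) D d k :
  kreachable e D d k.+1 -> k <= exc e D d.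
Proof.
move=> h; rewrite /exc; case: pboolP => [_|nr].
  by have := reach_ge ei h; case: (reach e D d).
by exfalso; apply: nr; exact: kreach_mono h.
Qed.

Lemma trunc (T : finType) (e : rel T) D s D' c :
  run e D s = Some D' -> D c < 2 -> 2 <= D' c ->
  exists t D2, [/\ run e D t = Some D2, 2 <= D2 c,
     all (fun m : move T => m.1 != c) t & {subset t <= s}].
Proof.
elim: s D => [|m s IH] D /=.
  by move=> [<-]; lia.
case hs: (step e D m) => [D1|] // hr hlt h2.
have m1 : m.1 != c.
  move: hs; case: m => a b; rewrite /step; case: ifP => // /andP [_ ha] _ /=.
  by apply/eqP => ac; subst; lia.
case: (ltnP (D1 c) 2) => h1.
  have [t [D2 [hr2 hc2 hall hsub]]] := IH D1 hr h1 h2.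
  exists (m :: t), D2; split => //=; first by rewrite hs.
    by rewrite m1.
  by move=> x; rewrite !inE => /orP [->|/hsub ->] //; rewrite orbT.
exists [:: m], D1; split => //=; first by rewrite hs.
  by rewrite m1.
by move=> x; rewrite !inE => ->.
Qed.

Lemma run_edges (T : finType) (e : rel T) D s D' :
  run e D s = Some D' -> all (fun m : move T => e m.1 m.2) s.
Proof.
elim: s D => [|[a b] s IH] D //=.
case hs: (step e D (a, b)) => [D1|] // /IH ->.
by move: hs; rewrite /step; case: ifP => // /andP [-> _].
Qed.

Lemma filt (T : finType) (e : rel T) (c : T) : forall (s : seq (move T)) (D D' E : dist T) (off : T -> nat),
  run e D s = Some D' -> all (fun m : move T => m.1 != c) s ->
  (forall x, x != c -> E x = D x + off x) ->
  exists E', [/\ run e E (filter (fun m : move T => m.2 != c) s) = Some E',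
    (forall x, x != c -> E' x = D' x + off x + 2 * count (pred1 (x, c)) s) &
    D' c = D c + count (fun m : move T => m.2 == c) s].
Proof.
elim => [|[a b] s IH] D D' E off /=.
  move=> [<-] _ hE; exists E; split => //; last by lia.
  by move=> x xc; rewrite hE //; lia.
case hs: (step e D (a, b)) => [D1|] // hr /andP [ac hall] hE.
move: hs; rewrite /step; case: ifP => // /andP [eab Da] [hD1].
case: (eqVneq b c) => [bc|bc].
  subst b.
  have [x xc|E' [hr' hx hc]] := IH D1 D' E (fun x => off x + 2 * (x == a)) hr hall.
    rewrite hE // -hD1 /=.
    have [->|xa] := eqVneq x a; first by rewrite ?eqxx; lia.
    by rewrite ?(negbTE xa) ?(negbTE xc); lia.
  exists E'; rewrite /= ?eqxx /=; split => //.
    move=> x xc; rewrite hx // xpair_eqE eqxx andbT.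
    have [->|xa] := eqVneq x a; first by rewrite ?eqxx /=; lia.
    by rewrite ?(eq_sym a x) ?(negbTE xa) /=; lia.
  by rewrite hc -hD1 /= eq_sym (negbTE ac) eqxx; lia.
set E1 := fun x => if x == a then E x - 2 else if x == b then E x + 1 else E x.
have hs1 : step e E (a, b) = Some E1.
  by rewrite /step eab hE //= ifT //; lia.
have [x xc|E' [hr' hx hc]] := IH D1 D' E1 off hr hall.
  rewrite /E1 -hD1 /=.
  have [->|xa] := eqVneq x a; first by rewrite hE //; lia.
  have [->|xb] := eqVneq x b; first by rewrite hE //; lia.
  by rewrite hE.
exists E'; rewrite /= hs1; split => //.
  by move=> x xc; rewrite hx // ?xpair_eqE ?(negbTE bc) ?andbF.
by rewrite hc -hD1 /= eq_sym (negbTE ac) ?(eq_sym c b) ?(negbTE bc).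
Qed.

Lemma minle (N x0 k : nat) (Q : pred nat) (hk : k < N) :
  Q k -> \big[minn/x0]_(i < N | Q i) i <= k.
Proof.
move=> qk.
have : Ordinal hk \in index_enum 'I_N by rewrite mem_index_enum.
elim: (index_enum _) => [//|j r IH]; rewrite inE big_cons => /orP [/eqP <- | /IH h].
  by rewrite /= qk geq_minl.
by case: ifP => // _; rewrite geq_min h orbT.
Qed.

Lemma minatt (N x0 : nat) (Q : pred nat) :
  Q x0 -> Q (\big[minn/x0]_(i < N | Q i) i).
Proof.
move=> q0; apply: (big_ind (fun x : nat => Q x)) => // x y qx qy.
by rewrite /minn; case: ifP.
Qed.

Lemma used_sub (T : finType) (e : rel T) (P U : dist T) v (t s : seq (move T)) :
  {subset t <= s} -> coop_used e P U v t <= coop_used e P U v s.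
Proof.
move=> hsub; apply: subset_leq_card; apply/subsetP => w; rewrite !inE.
move=> /andP [-> /orP [hu|->]]; rewrite ?orbT //=.
move: hu; rewrite /utilized => /hasP [m /hsub hm hw]; apply/orP; left.
by apply/hasP; exists m.
Qed.

Lemma used_lt (T : finType) (e : rel T) (P U : dist T) c d (t : seq (move T)) :
  pbool (coop_vertex e P U c) -> all (fun m : move T => m.1 != c) t ->
  (d, c) \in t -> c != d ->
  coop_used e P U d (filter (fun m : move T => m.2 != c) t) < coop_used e P U c t.
Proof.
move=> hc hall dct cd; apply: proper_card; apply/properP; split.
  apply/subsetP => w; rewrite !inE => /andP [-> /orP [hu|/eqP ->]] /=.
    move: hu; rewrite /utilized => /hasP [m]; rewrite mem_filter => /andP [_ hm] hw.
    by apply/orP; left; apply/hasP; exists m.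
  by apply/orP; left; apply/hasP; exists (d, c) => //=; rewrite eqxx.
exists c; first by rewrite !inE hc eqxx orbT.
rewrite !inE hc /= (negbTE cd) orbF /utilized; apply/hasPn => m.
rewrite mem_filter => /andP [h2 hm].
by rewrite (negbTE h2) (negbTE (allP hall m hm)).
Qed.


Theorem claim3p5 (T : finType) (e : rel T)
  (e_sym : symmetric e) (e_irr : irreflexive e)
  (P : T -> nat) (u : T) (n : nat) (n_pos : (0 < n)%N) (disj : P u = 0%N)
  (c : T)
  (c_coop : coop_vertex e P (unitD u n) c)
  (c_2reach : kreachable e (addD P (unitD u n)) c 2) :
  (exists f1 f2 : T, f1 != f2 /\ e c f1 /\ e c f2 /\
     (1 <= coop_excess e P (unitD u n) f1)%R /\
     (1 <= coop_excess e P (unitD u n) f2)%R /\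
     Mlt (Mval e P (unitD u n) f1) (Mval e P (unitD u n) c) /\
     Mlt (Mval e P (unitD u n) f2) (Mval e P (unitD u n) c))
  \/
  (exists d : T, e c d /\
     (3 <= coop_excess e P (unitD u n) d)%R /\
     Mlt (Mval e P (unitD u n) d) (Mval e P (unitD u n) c)).
Proof.
have hcc : pbool (coop_vertex e P (unitD u n) c) by apply/pboolP.
case: (c_coop) => _ [nP nU].
have Pc : P c = 0.
  case: (posnP (P c)) => [//|h]; exfalso; apply: nP; exists [::], P; split => //.
have Uc : unitD u n c = 0.
  rewrite /unitD; case: eqP => // cu; exfalso; apply: nU.
  by exists [::], (unitD u n); split => //; rewrite /unitD cu eqxx.
have Dc : addD P (unitD u n) c = 0 by rewrite /addD Pc Uc.
have hMc : pbool (kreachable e (addD P (unitD u n)) c 2) by apply/pboolP.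
set mc := \big[minn/#|T|]_(k < #|T|.+1 | pbool (M_le e P (unitD u n) c k)) k.
have Mc : Mval e P (unitD u n) c = Some mc by rewrite /Mval hMc.
have hMle : pbool (M_le e P (unitD u n) c mc).
  apply: (@minatt _ _ (fun k => pbool (M_le e P (unitD u n) c k))); apply/pboolP.
  case: c_2reach => s [D' [hr h2]]; exists s, D'; split => //; split => //.
  exact: max_card.
case/pboolP: hMle => s [D' [hr [h2 hcu]]].
have hlt : addD P (unitD u n) c < 2 by rewrite Dc.
have [t [D2 [hr2 h22 hall hsub]]] := trunc hr hlt h2.
have [E' [hr' hx hc]] := @filt _ e c t _ _ (addD P (unitD u n)) (fun _ => 0) hr2 hall
   (fun x _ => esym (addn0 _)).
have hedges := run_edges hr2.
have key : forall d k, 0 < k -> k <= count (pred1 (d, c)) t ->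
  [/\ e c d, (2 * k).-1 <= exc e (addD P (unitD u n)) d, exc e P d = 0,
      exc e (unitD u n) d = 0 &
      Mlt (Mval e P (unitD u n) d) (Mval e P (unitD u n) c)].
  move=> d k k0 kc.
  have dct : (d, c) \in t by rewrite -has_pred1 has_count; lia.
  have edc : e d c := allP hedges _ dct.
  have dc : d != c := allP hall _ dct.
  have cd : c != d by rewrite eq_sym.
  have kd : kreachable e (addD P (unitD u n)) d (2 * k).
    by exists (filter (fun m : move T => m.2 != c) t), E'; split => //; rewrite hx //; lia.
  have kd2 : kreachable e (addD P (unitD u n)) d 2 by apply: kreach_mono kd; lia.
  split.
  - by rewrite e_sym.
  - by apply: (exc_ge e_irr); apply: kreach_mono kd; lia.
  - exact: exc0 edc cd nP.
  - exact: exc0 edc cd nU.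
  rewrite Mc /Mval (introT (pboolP _) kd2) /=.
  set kk0 := coop_used e P (unitD u n) d (filter (fun m : move T => m.2 != c) t).
  have hk0 : kk0 < #|T|.+1 by rewrite ltnS max_card.
  have hq : pbool (M_le e P (unitD u n) d kk0).
    apply/pboolP; exists (filter (fun m : move T => m.2 != c) t), E'.
    by split => //; split => //; rewrite hx //; lia.
  have := @minle #|T|.+1 #|T| kk0 (fun k => pbool (M_le e P (unitD u n) d k)) hk0 hq.
  move/leq_ltn_trans; apply.
  apply: (leq_trans (used_lt hcc hall dct cd)).
  by apply: (leq_trans (used_sub _ _ _ _ hsub)).
have hcnt : 2 <= count (fun m : move T => m.2 == c) t by lia.
have : has (fun m : move T => m.2 == c) t by rewrite has_count; lia.
case/hasP => [[d1 c1] m1t /= /eqP ?]; subst c1.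
have c1pos : 0 < count (pred1 (d1, c)) t by rewrite -has_count has_pred1.
case: (leqP 2 (count (pred1 (d1, c)) t)) => h.
  right; have [ec hx3 hP hU hM] := key d1 2 isT h; exists d1; split; first exact: ec.
  split; last exact: hM.
  by rewrite /coop_excess hP hU !subr0 -[3%R]/(Posz 3) lez_nat; exact: hx3.
have hsplit : count (fun m : move T => m.2 == c) t = count (pred1 (d1, c)) t +
    count (fun m : move T => (m.2 == c) && (m != (d1, c))) t.
  elim: (t) => //= m r ->.
  have [->|ne] := eqVneq m (d1, c); rewrite /= ?eqxx ?andbF ?andbT /=; lia.
have : has (fun m : move T => (m.2 == c) && (m != (d1, c))) t by rewrite has_count; lia.
case/hasP => [[d2 c2] m2t /= /andP [/eqP ? ne]]; subst c2.
have d12 : d1 != d2 by apply/eqP => hh; move: ne; rewrite hh eqxx.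
have c2pos : 0 < count (pred1 (d2, c)) t by rewrite -has_count has_pred1.
have [ec1 hx1 hP1 hU1 hM1] := key d1 1 isT c1pos.
have [ec2 hx2 hP2 hU2 hM2] := key d2 1 isT c2pos.
left; exists d1, d2; split; first exact: d12.
split; first exact: ec1.
split; first exact: ec2.
split; first by rewrite /coop_excess hP1 hU1 !subr0 -[1%R]/(Posz 1) lez_nat; exact: hx1.
split; first by rewrite /coop_excess hP2 hU2 !subr0 -[1%R]/(Posz 1) lez_nat; exact: hx2.
exact: (conj hM1 hM2).
Qed.
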